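(* Let $N\ge 1$ and let $L=\sum_{i=0}^N a_i(x)\partial_x^i$, where each $a_i$ is a complex polynomial with $\deg a_i\le i$, written $a_i(x)=\sum_{j=0}^i a_{i,j}x^j$, with $a_0\equiv 0$ and with the convention $a_i\equiv 0$ (all $a_{i,j}=0$) for $i>N$. For $n\ge 0$ and $0\le k\le n$ put $$\delta_n^{(k)}=\sum_{i=k}^{n}\binom{n}{i}\, i!\, a_{i,i-k}.$$ 1. For every $n\ge 0$, every $\lambda_n\in\mathbb{C}$ and every monic polynomial $P_n(x)=\sum_{i=0}^n b_{n,i}x^i$ of degree $n$ ($b_{n,n}=1$, and $b_{n,s}=0$ for $s>n$), the identity $\sum_{i=1}^N a_i(x)\partial_x^iP_n(x)=\lambda_nP_n(x)$ holds if and only if $$\sum_{k=0}^N\delta_{m+k}^{(k)}\, b_{n,m+k}=\lambda_n b_{n,m},\qquad m=0,1,\ldots,n.$$ 2. Suppose that there are complex numbers $\lambda_n$ ($n\ge 0$, $\lambda_0=0$) and monic polynomials $P_n$ of degree $n$ with $\sum_{i=1}^N a_i\partial_x^iP_n=\lambda_nP_n$ for all $n\ge0$. Let $M$ be the semi-infinite upper triangular matrix with entries (rows and columns indexed from $0$) $M_{r,c}=\delta_c^{(c-r)}$ if $0\le c-r\le N$ and $M_{r,c}=0$ otherwise, and let $M_{n+1}$ be its truncation to the first $n+1$ rows and columns. Assume $\lambda_n\notin\{0,\lambda_1,\ldots,\lambda_{n-1}\}$ for all $n=1,2,\ldots$. Then for each $n\ge1$, $P_n$ is the unique monic polynomial (of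 degree $n$) satisfying $\sum_{i=1}^N a_i\partial_x^iP_n=\lambda_nP_n$, and its coefficient vector $b_n=(b_{n,0},\ldots,b_{n,n-1},1)^T$ is an eigenvector of $M_{n+1}$ for the eigenvalue $\lambda_n$, i.e. $(M_{n+1}-\lambda_nI_{n+1})b_n=0$.
   Context: $\partial_x^i$ denotes the $i$-th derivative with respect to $x$. The normalization $a_0\equiv0$, $\lambda_0=0$ is a standing convention of the paper. *)

(* Defs.v *)
(* Complex numbers: R[i] = complex R for an arbitrary
   realType R (every realType is a complete Archimedean ordered field,
   i.e. a copy of the reals, so R[i] is a copy of C). *)
From HB Require Import structures.
From mathcomp Require Import all_boot all_order all_algebra.
From mathcomp Require Import reals complex.
Set Implicit Arguments. Unset Strict Implicit. Unset Printing Implicit Defensive.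
Import Order.TTheory GRing.Theory Num.Theory.
Local Open Scope ring_scope.

Definition Lop (C : nzRingType) (N : nat) (a : nat -> {poly C}) (P : {poly C})
  : {poly C} :=
  \sum_(1 <= i < N.+1) a i * P^`(i).

Definition delta (C : nzRingType) (a : nat -> {poly C}) (n k : nat) : C :=
  \sum_(k <= i < n.+1) ('C(n, i) * i`!)%:R * (a i)`_(i - k).

Definition Mtrunc (C : nzRingType) (N : nat) (a : nat -> {poly C}) (n : nat)
  : 'M[C]_(n.+1) :=
  \matrix_(r < n.+1, c < n.+1)
     (if (r <= c)%N && (c - r <= N)%N then delta a c (c - r) else 0).

Definition coefvec (C : nzRingType) (n : nat) (P : {poly C}) : 'cV[C]_(n.+1) :=
  \col_(i < n.+1) P`_i.

(* Main.v *)
Require Import Defs.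
From HB Require Import structures.
From mathcomp Require Import all_boot all_order all_algebra.
From mathcomp Require Import reals complex.
From mathcomp Require Import zify ring.
Import Order.TTheory GRing.Theory Num.Theory.
Local Open Scope ring_scope.

Lemma sum_ext0 (C : nmodType) (n n' : nat) (F : nat -> C) : (n <= n')%N ->
  (forall j, (n <= j < n')%N -> F j = 0) ->
  \sum_(0 <= j < n') F j = \sum_(0 <= j < n) F j.
Proof.
move=> hn hF; rewrite (big_cat_nat (leq0n n) hn) /=.
rewrite [X in _ + X]big_nat_cond [X in _ + X]big1 ?addr0 // => j /andP[hj _]; exact: hF.
Qed.

Lemma sum_from (C : nmodType) (k n : nat) (F : nat -> C) : (k <= n)%N ->
  \sum_(k <= i < n) F i = \sum_(0 <= i < n) (if (k <= i)%N then F i else 0).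
Proof.
move=> hk; rewrite (big_cat_nat (leq0n k) hk) /=.
rewrite [X in _ = X + _]big_nat_cond [X in _ = X + _]big1 ?add0r.
  by apply: eq_big_nat => i /andP[-> _].
move=> i /andP[/andP[_ hi] _]; by rewrite leqNgt hi.
Qed.

Lemma term_i (C : comNzRingType) (A P : {poly C}) (i m N : nat) :
  (size A <= i.+1)%N -> (i <= N)%N ->
  (A * P^`(i))`_m = \sum_(0 <= k < N.+1)
     (if (k <= i)%N then ('C(m+k,i) * i`!)%:R * A`_(i-k) * P`_(m+k) else 0).
Proof.
move=> hA hiN.
pose H j := A`_j * (P`_(i + (m - j)) *+ (i + (m - j)) ^_ i).
have -> : (A * P^`(i))`_m = \sum_(0 <= j < m.+1) H j.
  by rewrite coefM big_mkord; apply: eq_bigr => j _; rewrite coef_derivn.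
pose G j := if (j <= m)%N then H j else 0.
have e1 : \sum_(0 <= j < m.+1) H j = \sum_(0 <= j < (m + i).+1) G j.
  rewrite (@sum_ext0 _ m.+1 (m + i).+1 G); last 2 first.
  - lia.
  - by move=> j /andP[hj _]; rewrite /G leqNgt hj.
  by apply: eq_big_nat => j /andP[_ hj]; rewrite /G -ltnS hj.
have e2 : \sum_(0 <= j < (m + i).+1) G j = \sum_(0 <= j < i.+1) G j.
  rewrite (@sum_ext0 _ i.+1 (m + i).+1 G) //; first lia.
  move=> j /andP[hj _]; rewrite /G /H nth_default ?mul0r ?if_same //.
  exact: leq_trans hA hj.
have e3 : \sum_(0 <= j < i.+1) G j = \sum_(0 <= k < i.+1) G (i - k)%N.
  rewrite big_nat_rev; apply: eq_big_nat => k _; congr G; lia.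
have e4 : \sum_(0 <= k < i.+1) G (i - k)%N = \sum_(0 <= k < N.+1) (if (k <= i)%N then G (i - k)%N else 0).
  rewrite (@sum_ext0 _ i.+1 N.+1 (fun k => if (k <= i)%N then G (i - k)%N else 0)); last 2 first.
  - lia.
  - by move=> k /andP[hk _]; rewrite leqNgt hk.
  by apply: eq_big_nat => k /andP[_ hk]; rewrite -ltnS hk.
rewrite e1 e2 e3 e4; apply: eq_big_nat => k _.
case: ifP => // hki; rewrite /G /H.
case: ifP => him.
  have -> : (i + (m - (i - k)) = m + k)%N by lia.
  by rewrite -bin_ffact mulrnAr -mulr_natl; ring.
rewrite bin_small ?mul0n ?mul0r //; lia.
Qed.

Lemma coefL (C : comNzRingType) (N : nat) (a : nat -> {poly C}) (P : {poly C}) (m : nat) :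
  (forall i, (size (a i) <= i.+1)%N) -> a 0%N = 0 -> (forall i, (N < i)%N -> a i = 0) ->
  (Lop N a P)`_m = \sum_(0 <= k < N.+1) delta a (m + k) k * P`_(m + k).
Proof.
move=> hs ha0 hN.
rewrite /Lop coef_sum.
have -> : \sum_(1 <= i < N.+1) (a i * P^`(i))`_m = \sum_(0 <= i < N.+1) (a i * P^`(i))`_m.
  by rewrite [RHS]big_ltn // ha0 mul0r coef0 add0r.
rewrite (eq_big_nat _ _ (F2 := fun i => \sum_(0 <= k < N.+1)
     (if (k <= i)%N then ('C(m+k,i) * i`!)%:R * (a i)`_(i-k) * P`_(m+k) else 0))); last first.
  by move=> i /andP[_ hi]; apply: term_i.
rewrite exchange_big_nat /=; apply: eq_big_nat => k /andP[_ hk].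
rewrite /delta mulr_suml (@sum_from _ k (m + k).+1); last lia.
rewrite -(@sum_ext0 _ N.+1 (N + m + k).+1); last 2 first.
- lia.
- move=> i /andP[hi _]; rewrite hN ?coef0 ?mulr0 ?mul0r ?if_same //.
rewrite -[in RHS](@sum_ext0 _ (m + k).+1 (N + m + k).+1) //; first lia.
move=> i /andP[hi _]; rewrite bin_small ?mul0n ?mul0r ?if_same //.
Qed.

Lemma shift_sum (C : nmodType) (r T : nat) (G : nat -> C) : (r <= T)%N ->
  \sum_(0 <= j < T) (if (r <= j)%N then G j else 0) = \sum_(0 <= k < T - r) G (k + r)%N.
Proof.
move=> hr; rewrite -sum_from // -{1}[r]add0n big_addn //.
Qed.

Theorem theorem1 (R : realType) (N : nat) (a : nat -> {poly R[i]}) :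
  (1 <= N)%N ->
  (forall i, (size (a i) <= i.+1)%N) ->
  a 0%N = 0 ->
  (forall i, (N < i)%N -> a i = 0) ->
  (* Part 1 *)
  (forall (n : nat) (lam : R[i]) (P : {poly R[i]}),
      P \is monic -> size P = n.+1 ->
      (Lop N a P = lam *: P <->
       (forall m, (m <= n)%N ->
          \sum_(0 <= k < N.+1) delta a (m + k) k * P`_(m + k) = lam * P`_m)))
  /\
  (* Part 2 *)
  (forall (lam : nat -> R[i]) (P : nat -> {poly R[i]}),
      lam 0%N = 0 ->
      (forall n, P n \is monic /\ size (P n) = n.+1 /\
                 Lop N a (P n) = lam n *: P n) ->
      (forall n, (1 <= n)%N ->
         lam n != 0 /\ (forall j, (1 <= j < n)%N -> lam n != lam j)) ->
      forall n, (1 <= n)%N ->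
        (forall Q : {poly R[i]}, Q \is monic -> size Q = n.+1 ->
           Lop N a Q = lam n *: Q -> Q = P n)
        /\ (Mtrunc N a n - (lam n)%:M) *m coefvec n (P n) = 0).
Proof.
move=> hN1 hs ha0 hN; split.
  move=> n lam P hm hsz; split.
    by move=> hL m hmn; rewrite -coefL // hL coefZ.
  move=> hc; apply/polyP => m; rewrite coefZ coefL //.
  case: (leqP m n) => hmn; first exact: hc.
  rewrite nth_default ?mulr0; last by rewrite hsz.
  rewrite big_nat_cond big1 // => k _; rewrite nth_default ?mulr0 // hsz; lia.
move=> lam P hl0 hP hne.
have delta0 m : delta a m 0 = lam m.
  have [hm [hsz hL]] := hP m.
  have h1 : (P m)`_m = 1 by rewrite -(monicP hm) lead_coefE hsz.
  have := congr1 (fun p : {poly R[i]} => p`_m) hL; rewrite /= coefZ coefL // big_ltn // addn0 h1.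
  rewrite [X in _ + X]big_nat_cond big1 ?addr0 ?mulr1 //.
  move=> k /andP[/andP[hk _] _]; rewrite nth_default ?mulr0 // hsz; lia.
move=> n hn; split.
  move=> Q hQm hQs hQL.
  have [hPm [hPs hPL]] := hP n.
  apply/eqP; rewrite -subr_eq0; set D := Q - P n.
  have hD m : \sum_(0 <= k < N.+1) delta a (m + k) k * D`_(m + k) = lam n * D`_m.
    transitivity (\sum_(0 <= k < N.+1) delta a (m + k) k * Q`_(m + k) -
                  \sum_(0 <= k < N.+1) delta a (m + k) k * (P n)`_(m + k)).
      by rewrite -sumrB; apply: eq_bigr => k _; rewrite coefB mulrBr.
    by rewrite -!coefL // hQL hPL !coefZ coefB mulrBr.
  have hsD : (size D <= n)%N.
    apply/leq_sizeP => j hj; rewrite coefB.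
    case: (ltngtP n j) hj => // [hnj _ | <- _].
      by rewrite !nth_default ?subr0 // ?hQs ?hPs.
    have e1 : Q`_n = 1 by rewrite -(monicP hQm) lead_coefE hQs.
    have e2 : (P n)`_n = 1 by rewrite -(monicP hPm) lead_coefE hPs.
    by rewrite e1 e2 subrr.
  apply: contraT => hD0.
  have hsp : (0 < size D)%N by rewrite size_poly_gt0.
  set d := (size D).-1.
  have hsd : size D = d.+1 by rewrite /d; lia.
  have lc : D`_d != 0 by rewrite /d -lead_coefE lead_coef_eq0.
  have hd : (d < n)%N by lia.
  have := hD d; rewrite big_ltn // addn0 [X in _ + X]big_nat_cond big1 ?addr0; last first.
    move=> k /andP[/andP[hk _] _]; rewrite nth_default ?mulr0 // hsd; lia.
  rewrite delta0 => /eqP; rewrite -subr_eq0 -mulrBl mulf_eq0 (negbTE lc) orbF subr_eq0.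
  move=> /eqP hlam.
  have [hne1 hne2] := hne n hn.
  case: (posnP d) => hd0.
    by move: hne1; rewrite -hlam hd0 hl0 eqxx.
  by move: (hne2 d); rewrite hd0 hd -hlam eqxx => /(_ isT).
have [hPm [hPs hPL]] := hP n.
apply/matrixP => r c; rewrite ord1 mulmxBl mul_scalar_mx !mxE.
apply/eqP; rewrite subr_eq0; apply/eqP.
have hr : \sum_(0 <= k < N.+1) delta a (r + k) k * (P n)`_(r + k) = lam n * (P n)`_r.
  by rewrite -coefL // hPL coefZ.
rewrite -hr.
under eq_bigr do rewrite !mxE.
pose F j := (if (r <= j)%N && (j - r <= N)%N then delta a j (j - r) else 0) * (P n)`_j.
rewrite -(big_mkord (fun _ => true) F).
pose T := (n + N + r).+1.
rewrite -(@sum_ext0 _ n.+1 T F); last 2 first.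
- lia.
- by move=> j /andP[hj _]; rewrite /F nth_default ?mulr0 // hPs.
pose G j := (if (j - r <= N)%N then delta a j (j - r) else 0) * (P n)`_j.
rewrite (eq_big_nat _ _ (F2 := fun j => if (r <= j)%N then G j else 0)); last first.
  by move=> j _; rewrite /F /G; case: (r <= j)%N => //=; rewrite mul0r.
rewrite shift_sum; last by rewrite /T; lia.
rewrite (@sum_ext0 _ N.+1 (T - r)); last 2 first.
- rewrite /T; lia.
- move=> k /andP[hk _]; rewrite /G addnK.
  by case: ifP => h; [lia | rewrite mul0r].
apply: eq_big_nat => k /andP[_ hk]; rewrite /G addnK.
by rewrite ifT ?(addnC k r) //; lia.
Qed.
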